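(* In every nonempty $\mathcal{V}$-poset $P$: (i) every non-basic element is comparable to at least one basic element; (ii) the set of basic elements is a maximal antichain; (iii) if an element $x$ is associated to the set of all basic elements of $P$, then the only maximal antichain of $P$ containing $x$ is $\{x\}$.
   Context: All posets are finite. A $\mathcal{V}$-poset is a poset that can be generated from the empty poset by repeatedly applying: (1) disjoint union of $\mathcal{V}$-posets, (2) adding a new greatest element, (3) adding a new least element. An element $x$ is basic if: (B.1) there are no two incomparable elements $u,v$ with $x>u$ and $x>v$; (B.2) there are no two incomparable elements $u,v$ with $x<u$ and $x<v$; (B.3) there is no element $u$ with $u<x$ such that for all $w\neq u,x$ one has ($u\ge w\iff x\ge w$) and ($u\le w\iff x\le w$). An element is associated to a set $B$ of basic elements if it is comparable to every element of $B$ and incomparable to every basic element not in $B$. An antichain is a set of pairwise incomparable elements; a maximal antichain is one not properly contained in another antichain. *)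

(* Defs.v *)
From HB Require Import structures.
From mathcomp Require Import all_boot all_order.
Set Implicit Arguments. Unset Strict Implicit. Unset Printing Implicit Defensive.
Import Order.TTheory.
Local Open Scope order_scope.

(* A finite poset is a finPOrderType.  [vgen A] : the induced subposet on the
   subset A of T can be generated from the empty poset by disjoint unions and
   adding a new greatest / least element. *)
Inductive vgen {d : Order.disp_t} {T : finPOrderType d} : {set T} -> Prop :=
| vgen0 : vgen set0
| vgenU (A B : {set T}) : vgen A -> vgen B -> [disjoint A & B] ->
    (forall a b, a \in A -> b \in B -> a >< b) -> vgen (A :|: B)
| vgenTop (A : {set T}) (x : T) : vgen A -> x \notin A ->
    (forall a, a \in A -> a < x) -> vgen (x |: A)
| vgenBot (A : {set T}) (x : T) : vgen A -> x \notin A ->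
    (forall a, a \in A -> x < a) -> vgen (x |: A).

Definition Vposet {d : Order.disp_t} (T : finPOrderType d) : Prop :=
  vgen [set: T].

(* basic elements: conditions (B.1), (B.2), (B.3) *)
Definition basic {d : Order.disp_t} {T : finPOrderType d} (x : T) : bool :=
  [&& [forall u : T, forall v : T, ~~ [&& u >< v, u < x & v < x]],
      [forall u : T, forall v : T, ~~ [&& u >< v, x < u & x < v]] &
      [forall u : T, ~~ ((u < x) &&
          [forall w : T, (w != u) && (w != x) ==>
             ((w <= u) == (w <= x)) && ((u <= w) == (x <= w))])]].

Definition basics {d : Order.disp_t} (T : finPOrderType d) : {set T} :=
  [set x | basic x].

Definition associated {d : Order.disp_t} {T : finPOrderType d} (x : T)
    (B : {set T}) : Prop :=
  (forall b, b \in B -> x >=< b) /\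
  (forall b, basic b -> b \notin B -> x >< b).

Definition antichain {d : Order.disp_t} {T : finPOrderType d} (A : {set T}) : Prop :=
  forall u v, u \in A -> v \in A -> u != v -> u >< v.

Definition maximal_antichain {d : Order.disp_t} {T : finPOrderType d}
    (A : {set T}) : Prop :=
  antichain A /\ forall A' : {set T}, antichain A' -> A \subset A' -> A' = A.

(* Main.v *)
Require Import Defs.
From HB Require Import structures.
From mathcomp Require Import all_boot all_order.
Import Order.TTheory.
Local Open Scope order_scope.

Definition basicS {d : Order.disp_t} {T : finPOrderType d} (S : {set T}) (x : T) : Prop :=
  (forall u v, u \in S -> v \in S -> u >< v -> u < x -> v < x -> False) /\
  (forall u v, u \in S -> v \in S -> u >< v -> x < u -> x < v -> False) /\
  (forall u, u \in S -> u < x -> ~ (forall w, w \in S -> w != u -> w != x ->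
       ((w <= u) = (w <= x)) /\ ((u <= w) = (x <= w)))).

Lemma basicE {d : Order.disp_t} {T : finPOrderType d} (x : T) :
  basic x <-> basicS setT x.
Proof.
split.
- move=> /and3P[/forallP H1 /forallP H2 /forallP H3]; split; [|split].
  + move=> u v _ _ uv ux vx; move: (forallP (H1 u) v); by rewrite uv ux vx.
  + move=> u v _ _ uv ux vx; move: (forallP (H2 u) v); by rewrite uv ux vx.
  + move=> u _ ux Htw; move: (H3 u); rewrite ux /=; move/negP; apply.
    apply/forallP => w; apply/implyP => /andP[wu wx].
    have [-> ->] := Htw w (in_setT w) wu wx; by rewrite !eqxx.
- move=> [H1 [H2 H3]]; apply/and3P; split.
  + apply/forallP=>u; apply/forallP=>v; apply/negP=>/and3P[uv ux vx].
    exact: H1 u v (in_setT _) (in_setT _) uv ux vx.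
  + apply/forallP=>u; apply/forallP=>v; apply/negP=>/and3P[uv ux vx].
    exact: H2 u v (in_setT _) (in_setT _) uv ux vx.
  + apply/forallP=>u; apply/negP=>/andP[ux /forallP Hw].
    apply: (H3 u (in_setT _) ux) => w _ wu wx.
    by move: (Hw w); rewrite wu wx /= => /andP[/eqP -> /eqP ->].
Qed.

Lemma exists_max {d : Order.disp_t} {T : finPOrderType d} (X : {set T}) :
  X != set0 -> exists2 m, m \in X & forall w, w \in X -> ~~ (m < w).
Proof.
case/set0Pn => x0 Hx0.
pose f := fun i : T => #|[set y | y <= i]|.
case: (@arg_maxnP _ x0 (mem X) f Hx0) => m Hm Hmax.
exists m => // w Hw; apply/negP => mw.
have H : (f w <= f m)%N := Hmax w Hw.
move: H; rewrite leqNgt => /negP; apply.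
apply: proper_card; apply/properP; split.
- by apply/subsetP => y; rewrite !inE => ym; exact: le_trans ym (ltW mw).
- by exists w; rewrite !inE ?lexx ?(lt_geF mw).
Qed.

Lemma comparable_or {d : Order.disp_t} {T : finPOrderType d} {x y : T} :
  x >=< y -> (x <= y) \/ (y <= x).
Proof. by case/orP; auto. Qed.

Lemma chain_nonbasic {d : Order.disp_t} {T : finPOrderType d} (S : {set T}) y z :
  (forall p q, p \in S -> q \in S -> p >=< q) -> y \in S -> z \in S -> z < y ->
  ~ basicS S y.
Proof.
move=> Hc yS zS zy [_ [_ H3]].
have : [set w in S | w < y] != set0 by apply/set0Pn; exists z; rewrite inE zS zy.
case/exists_max => u; rewrite inE => /andP[uS uy] umax.
apply: (H3 u uS uy) => w wS wu wy; split.
- apply/idP/idP => h; first exact: le_trans h (ltW uy).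
  have wy' : w < y by rewrite lt_neqAle wy h.
  case: (comparable_or (Hc w u wS uS)) => // uw.
  have : u < w by rewrite lt_neqAle eq_sym wu uw.
  by move: (umax w); rewrite inE wS wy' => /(_ isT) /negP.
- apply/idP/idP => h; last exact: le_trans (ltW uy) h.
  case: (comparable_or (Hc y w yS wS)) => // wy2.
  have wy' : w < y by rewrite lt_neqAle wy wy2.
  have : u < w by rewrite lt_neqAle eq_sym wu h.
  by move: (umax w); rewrite inE wS wy' => /(_ isT) /negP.
Qed.

Lemma incompF {d : Order.disp_t} {T : finPOrderType d} {x y : T} :
  x >< y -> (x <= y) = false /\ (y <= x) = false.
Proof. by move=> /norP[/negbTE -> /negbTE ->]. Qed.

Lemma basic_union {d : Order.disp_t} {T : finPOrderType d} (A B : {set T}) y :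
  (forall a b, a \in A -> b \in B -> a >< b) -> y \in A ->
  basicS (A :|: B) y <-> basicS A y.
Proof.
move=> Hx yA.
have inA : forall u, u \in A :|: B -> u >=< y -> u \in A.
  move=> u /setUP[//|uB] uy; move: (Hx y u yA uB).
  by rewrite comparable_sym uy.
split.
- move=> [H1 [H2 H3]]; split; [|split].
  + by move=> u v uA vA; apply: H1; rewrite inE ?uA ?vA.
  + by move=> u v uA vA; apply: H2; rewrite inE ?uA ?vA.
  + move=> u uA uy Htw; apply: (H3 u _ uy); first by rewrite inE uA.
    move=> w /setUP[wA|wB] wu wy; first exact: Htw.
    have [-> ->] := incompF (Hx u w uA wB).
    by have [-> ->] := incompF (Hx y w yA wB).
- move=> [H1 [H2 H3]]; split; [|split].
  + move=> u v uS vS uv uy vy; apply: (H1 u v _ _ uv uy vy).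
    * exact: inA uS (lt_comparable uy).
    * exact: inA vS (lt_comparable vy).
  + move=> u v uS vS uv uy vy; apply: (H2 u v _ _ uv uy vy).
    * by apply: inA uS _; rewrite comparable_sym (lt_comparable uy).
    * by apply: inA vS _; rewrite comparable_sym (lt_comparable vy).
  + move=> u uS uy Htw; apply: (H3 u (inA u uS (lt_comparable uy)) uy).
    by move=> w wA; apply: Htw; rewrite inE wA.
Qed.

Lemma basic_top {d : Order.disp_t} {T : finPOrderType d} (Q : {set T}) t y :
  (forall a, a \in Q -> a < t) -> y \in Q ->
  basicS (t |: Q) y <-> basicS Q y.
Proof.
move=> Ht yQ.
split.
- move=> [H1 [H2 H3]]; split; [|split].
  + by move=> u v uA vA; apply: H1; rewrite !inE ?uA ?vA orbT.
  + by move=> u v uA vA; apply: H2; rewrite !inE ?uA ?vA orbT.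
  + move=> u uA uy Htw; apply: (H3 u _ uy); first by rewrite !inE uA orbT.
    move=> w /setU1P[->|wA] wu wy; last exact: Htw.
    by rewrite (lt_geF (Ht u uA)) (lt_geF (Ht y yQ)) (ltW (Ht u uA)) (ltW (Ht y yQ)).
- have notT : forall u, u \in t |: Q -> u < y -> u \in Q.
    move=> u /setU1P[->|//] ty; by move: (Ht y yQ); rewrite lt_gtF.
  move=> [H1 [H2 H3]]; split; [|split].
  + move=> u v uS vS uv uy vy; exact: (H1 u v (notT u uS uy) (notT v vS vy) uv uy vy).
  + move=> u v uS vS uv uy vy.
    move: uS vS uv => /setU1P[->|uQ] /setU1P[->|vQ].
    * by rewrite comparablexx.
    * by rewrite comparable_sym (lt_comparable (Ht v vQ)).
    * by rewrite (lt_comparable (Ht u uQ)).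
    * move=> uv; exact: (H2 u v uQ vQ uv uy vy).
  + move=> u uS uy Htw; apply: (H3 u (notT u uS uy) uy).
    by move=> w wA; apply: Htw; rewrite !inE wA orbT.
Qed.

Lemma basic_bot {d : Order.disp_t} {T : finPOrderType d} (Q : {set T}) b y p q :
  (forall a, a \in Q -> b < a) -> y \in Q -> p \in Q -> q \in Q -> p >< q ->
  basicS (b |: Q) y <-> basicS Q y.
Proof.
move=> Hb yQ pQ qQ pq.
split.
- move=> [H1 [H2 H3]]; split; [|split].
  + by move=> u v uA vA; apply: H1; rewrite !inE ?uA ?vA orbT.
  + by move=> u v uA vA; apply: H2; rewrite !inE ?uA ?vA orbT.
  + move=> u uA uy Htw; apply: (H3 u _ uy); first by rewrite !inE uA orbT.
    move=> w /setU1P[->|wA] wu wy; last exact: Htw.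
    by rewrite (lt_geF (Hb u uA)) (lt_geF (Hb y yQ)) (ltW (Hb u uA)) (ltW (Hb y yQ)).
- move=> [H1 [H2 H3]]; split; [|split].
  + move=> u v uS vS uv uy vy.
    move: uS vS uv => /setU1P[->|uQ] /setU1P[->|vQ].
    * by rewrite comparablexx.
    * by rewrite (lt_comparable (Hb v vQ)).
    * by rewrite comparable_sym (lt_comparable (Hb u uQ)).
    * move=> uv; exact: (H1 u v uQ vQ uv uy vy).
  + have notB : forall u, u \in b |: Q -> y < u -> u \in Q.
      move=> u /setU1P[->|//] ty; by move: (Hb y yQ); rewrite lt_gtF.
    move=> u v uS vS uv uy vy; exact: (H2 u v (notB u uS uy) (notB v vS vy) uv uy vy).
  + move=> u /setU1P[->|uQ] uy Htw; last first.
      apply: (H3 u uQ uy) => w wA; apply: Htw; by rewrite !inE wA orbT.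
    have above : forall w, w \in Q -> w != y -> y < w.
      move=> w wQ wy.
      have wb : w != b by apply/eqP => e; move: (Hb w wQ); rewrite e ltxx.
      have wS : w \in b |: Q by rewrite !inE wQ orbT.
      have [e1 e2] := Htw w wS wb wy.
      rewrite (ltW (Hb w wQ)) in e2.
      by rewrite lt_neqAle eq_sym wy -e2.
    have pnq : p != q by apply/eqP => e; rewrite e comparablexx in pq.
    have py : p != y.
      apply/eqP => e; move: pq pnq; rewrite e => pq pnq.
      have qy : q != y by rewrite eq_sym.
      by move: pq; rewrite (lt_comparable (above q qQ qy)).
    have qy : q != y.
      apply/eqP => e; move: pq; rewrite e.
      by rewrite comparable_sym (lt_comparable (above p pQ py)).
    exact: (H2 p q pQ qQ pq (above p pQ py) (above q qQ qy)).
Qed.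

Definition P1 {d : Order.disp_t} {T : finPOrderType d} (S : {set T}) : Prop :=
  forall x, x \in S -> exists b, [/\ b \in S, basicS S b & x >=< b].
Definition P2 {d : Order.disp_t} {T : finPOrderType d} (S : {set T}) : Prop :=
  forall a b, a \in S -> b \in S -> basicS S a -> basicS S b -> a != b -> a >< b.
Definition P3 {d : Order.disp_t} {T : finPOrderType d} (S : {set T}) : Prop :=
  forall x y, x \in S -> y \in S -> (forall b, b \in S -> basicS S b -> x >=< b) ->
    x >=< y.

Lemma chain_or_not {d : Order.disp_t} {T : finPOrderType d} (Q : {set T}) :
  (exists p q, [/\ p \in Q, q \in Q & p >< q]) \/
  (forall p q, p \in Q -> q \in Q -> p >=< q).
Proof.
case: (boolP [exists p, exists q, [&& p \in Q, q \in Q & p >< q]]).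
- by move=> /existsP[p /existsP[q /and3P[]]]; left; exists p, q.
- move=> H; right => p q pQ qQ; apply/negPn/negP => npq; move/negP: H; apply.
  by apply/existsP; exists p; apply/existsP; exists q; rewrite pQ qQ npq.
Qed.

Lemma botchain_props {d : Order.disp_t} {T : finPOrderType d} (Q : {set T}) b :
  (forall a, a \in Q -> b < a) -> (forall p q, p \in Q -> q \in Q -> p >=< q) ->
  P1 (b |: Q) /\ P2 (b |: Q) /\ P3 (b |: Q).
Proof.
move=> Hb Hc.
have Hc' : forall p q, p \in b |: Q -> q \in b |: Q -> p >=< q.
  move=> p q /setU1P[->|pQ] /setU1P[->|qQ].
  - exact: comparablexx.
  - exact: lt_comparable (Hb q qQ).
  - by rewrite comparable_sym (lt_comparable (Hb p pQ)).
  - exact: Hc.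
have bS : b \in b |: Q by rewrite !inE eqxx.
have bB : basicS (b |: Q) b.
  have nolt : forall u, u \in b |: Q -> u < b -> False.
    move=> u /setU1P[->|uQ]; first by rewrite ltxx.
    by rewrite lt_gtF // Hb.
  split; [|split].
  - move=> u v uS _ _ ub _; exact: nolt u uS ub.
  - by move=> u v uS vS; rewrite Hc'.
  - move=> u uS ub _; exact: nolt u uS ub.
have onlyb : forall y, y \in b |: Q -> basicS (b |: Q) y -> y = b.
  move=> y /setU1P[//|yQ] yB; exfalso.
  have yS : y \in b |: Q by rewrite !inE yQ orbT.
  exact: (@chain_nonbasic _ _ (b |: Q) y b Hc' yS bS (Hb y yQ) yB).
split; [|split].
- by move=> x xS; exists b; split => //; apply: Hc'.
- move=> a c aS cS aB cB; by rewrite (onlyb a aS aB) (onlyb c cS cB) eqxx.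
- by move=> x y xS yS _; apply: Hc'.
Qed.

Lemma chain_add {d : Order.disp_t} {T : finPOrderType d} (Q : {set T}) t :
  (forall a, a \in Q -> t >=< a) -> (forall p q, p \in Q -> q \in Q -> p >=< q) ->
  (forall p q, p \in t |: Q -> q \in t |: Q -> p >=< q).
Proof.
move=> Ht Hc p q /setU1P[->|pQ] /setU1P[->|qQ].
- exact: comparablexx.
- exact: Ht.
- by rewrite comparable_sym Ht.
- exact: Hc.
Qed.

Lemma extend_props {d : Order.disp_t} {T : finPOrderType d} (Q : {set T}) t :
  Q != set0 -> P1 Q /\ P2 Q /\ P3 Q -> (forall a, a \in Q -> t >=< a) ->
  (forall y, y \in Q -> basicS (t |: Q) y <-> basicS Q y) -> ~ basicS (t |: Q) t ->
  P1 (t |: Q) /\ P2 (t |: Q) /\ P3 (t |: Q).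
Proof.
move=> Qn [IH1 [IH2 IH3]] Hc E NT.
have inS : forall y, y \in Q -> y \in t |: Q by move=> y yQ; rewrite !inE yQ orbT.
split; [|split].
- move=> x /setU1P[->|xQ].
  + case/set0Pn: Qn => z zQ; have [c [cQ cB _]] := IH1 z zQ.
    exists c; split; [exact: inS | exact: (E c cQ).2 | exact: Hc].
  + have [c [cQ cB xc]] := IH1 x xQ.
    exists c; split => //; [exact: inS | exact: (E c cQ).2].
- move=> a c /setU1P[->|aQ] /setU1P[->|cQ] aB cB; try by case: NT.
  by apply: IH2 => //; [exact: (E a aQ).1 | exact: (E c cQ).1].
- move=> x y /setU1P[->|xQ] /setU1P[->|yQ] H.
  + exact: comparablexx.
  + exact: Hc.
  + by rewrite comparable_sym Hc.
  + apply: IH3 => // c cQ cB; apply: H; [exact: inS | exact: (E c cQ).2].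
Qed.

Lemma main {d : Order.disp_t} {T : finPOrderType d} (S : {set T}) :
  vgen S -> S != set0 -> P1 S /\ P2 S /\ P3 S.
Proof.
elim => [|A B vA IHA vB IHB disj Hx|A t vA IHA tA Ht|A t vA IHA tA Ht].
- by rewrite eqxx.
- move=> Sn.
  have [EA0|An] := eqVneq A set0; first by rewrite EA0 set0U in Sn *; exact: IHB.
  have [EB0|Bn] := eqVneq B set0; first by rewrite EB0 setU0 in Sn *; exact: IHA.
  have [IA1 [IA2 IA3]] := IHA An; have [IB1 [IB2 IB3]] := IHB Bn.
  have Hx' : forall b a, b \in B -> a \in A -> b >< a.
    by move=> b a bB aA; rewrite comparable_sym; exact: Hx.
  have EA : forall y, y \in A -> basicS (A :|: B) y <-> basicS A y.
    by move=> y yA; exact: (@basic_union _ _ A B y Hx yA).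
  have EB : forall y, y \in B -> basicS (A :|: B) y <-> basicS B y.
    by move=> y yB; rewrite setUC; exact: (@basic_union _ _ B A y Hx' yB).
  split; [|split].
  + move=> x /setUP[xA|xB].
    * have [c [cA cBs xc]] := IA1 x xA; exists c; split => //;
        [by rewrite inE cA | exact: (EA c cA).2].
    * have [c [cB cBs xc]] := IB1 x xB; exists c; split => //;
        [by rewrite inE cB orbT | exact: (EB c cB).2].
  + move=> a c /setUP[aA|aB] /setUP[cA|cB] aBs cBs ac.
    * exact: IA2 a c aA cA ((EA a aA).1 aBs) ((EA c cA).1 cBs) ac.
    * exact: Hx.
    * exact: Hx'.
    * exact: IB2 a c aB cB ((EB a aB).1 aBs) ((EB c cB).1 cBs) ac.
  + move=> x y /setUP[xA|xB] _ H; exfalso.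
    * case/set0Pn: Bn => z zB; have [c [cB cBs _]] := IB1 z zB.
      have cS : c \in A :|: B by rewrite inE cB orbT.
      move/negP: (Hx x c xA cB); apply; exact: H c cS ((EB c cB).2 cBs).
    * case/set0Pn: An => z zA; have [c [cA cBs _]] := IA1 z zA.
      have cS : c \in A :|: B by rewrite inE cA.
      move/negP: (Hx' x c xB cA); apply; exact: H c cS ((EA c cA).2 cBs).
- move=> Sn.
  have [EA0|An] := eqVneq A set0.
    by rewrite EA0; apply: botchain_props => [a|p q]; rewrite inE.
  have Ht' : forall a, a \in A -> t >=< a.
    by move=> a aA; rewrite comparable_sym lt_comparable // Ht.
  apply: extend_props => //; first exact: IHA.
  + by move=> y yA; exact: (@basic_top _ _ A t y Ht yA).
  + move=> tB; have tS : t \in t |: A by rewrite !inE eqxx.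
    case: (chain_or_not A) => [[p [q [pA qA pq]]]|Hc].
    * case: tB => H1 _.
      have pS : p \in t |: A by rewrite !inE pA orbT.
      have qS : q \in t |: A by rewrite !inE qA orbT.
      exact: H1 p q pS qS pq (Ht p pA) (Ht q qA).
    * case/set0Pn: An => z zA; have zS : z \in t |: A by rewrite !inE zA orbT.
      exact: (@chain_nonbasic _ _ (t |: A) t z (@chain_add _ _ A t Ht' Hc) tS zS (Ht z zA) tB).
- move=> Sn.
  have [EA0|An] := eqVneq A set0.
    by rewrite EA0; apply: botchain_props => [a|p q]; rewrite inE.
  case: (chain_or_not A) => [[p [q [pA qA pq]]]|Hc]; last exact: botchain_props.
  have Ht' : forall a, a \in A -> t >=< a.
    by move=> a aA; rewrite lt_comparable // Ht.
  apply: extend_props => //; first exact: IHA.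
  + by move=> y yA; exact: (@basic_bot _ _ A t y p q Ht yA pA qA pq).
  + move=> tB; case: tB => _ [H2 _].
    have pS : p \in t |: A by rewrite !inE pA orbT.
    have qS : q \in t |: A by rewrite !inE qA orbT.
    exact: H2 p q pS qS pq (Ht p pA) (Ht q qA).
Qed.

Theorem proposition3p12 (d : Order.disp_t) (T : finPOrderType d) :
  Vposet T -> (0 < #|T|)%N ->
  (forall x : T, ~~ basic x -> exists b : T, basic b /\ x >=< b) /\
  maximal_antichain (basics T) /\
  (forall x : T, associated x (basics T) ->
     forall A : {set T}, maximal_antichain A -> x \in A -> A = [set x]).
Proof.
move=> HV Hn.
have Sn : [set: T] != set0 by rewrite -card_gt0 cardsT.
have [H1 [H2 H3]] := @main _ _ _ HV Sn.
split; [|split].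
- move=> x nb; have [b [_ bB xb]] := H1 x (in_setT x).
  by exists b; split => //; apply/basicE.
- split.
  + move=> u v; rewrite !inE => uB vB uv.
    exact: H2 u v (in_setT _) (in_setT _) ((basicE u).1 uB) ((basicE v).1 vB) uv.
  + move=> A' HA' sub; apply/eqP; rewrite eqEsubset sub andbT.
    apply/subsetP => y yA'; rewrite inE; apply/negPn/negP => ny.
    have [b [_ bB yb]] := H1 y (in_setT y).
    have bb : basic b := (basicE b).2 bB.
    have bA' : b \in A' by apply: (subsetP sub); rewrite inE.
    have yneb : y != b by apply/eqP => e; rewrite e bb in ny.
    by move/negP: (HA' y b yA' bA' yneb); apply.
- move=> x [Hax _] A [HA _] xA; apply/setP => y; rewrite inE.
  case: eqP => [->//|ny]; apply/negP => yA.
  have xy : x != y by apply/eqP => e; apply: ny; rewrite e.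
  move/negP: (HA x y xA yA xy); apply; apply: H3 => // b _ bB; apply: Hax.
  by rewrite inE; apply/basicE.
Qed.
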